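(* Let $2\le k\le d+1$ and let $\mathcal{Q}=\{Q_1,\dots,Q_k\}$ be a collection of cubes in $\mathbb{R}^d$ that is transversal. Then each $Q_l$ can be partitioned into finitely many (a number bounded independently of anything but the collection) sub-cubes $Q_l=\bigcup_i Q_{l,i}$ such that every collection $\widetilde{\mathcal{Q}}=\{\widetilde Q_1,\dots,\widetilde Q_k\}$ with $\widetilde Q_l\in\{Q_{l,i}\}_i$ for each $l$ is weakly transversal.
   Context: ''Cube'' means any rectangular box in $\mathbb{R}^d$ (sides need not be equal). A collection of cubes $Q_1,\dots,Q_k$ is transversal if the caps $S_j=\{(\xi,|\xi|^2):\xi\in Q_j\}$ of the paraboloid are transversal: there is $c>0$ with $|v_1\wedge\dots\wedge v_k|\ge c$ for all choices of unit normal vectors $v_j$ to $S_j$. Let $\pi_l$ denote the projection onto the $l$-th coordinate axis $e_l$. A collection $\{Q_1,\dots,Q_k\}$ is weakly transversal with pivot $Q_j$ if there are $k-1$ distinct indices $i_1,\dots,i_{k-1}$ and an enumeration $l_1,\dots,l_{k-1}$ of $\{1,\dots,k\}\setminus\{j\}$ such that $\overline{\pi_{i_s}(Q_j)}\cap\overline{\pi_{i_s}(Q_{l_s})}=\emptyset$ for $s=1,\dots,k-1$. The collection is weakly transversal if it is weakly transversal with pivot $Q_j$ for every $1\le j\le k$. *)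

(* Defs.v *)
From HB Require Import structures.
From mathcomp Require Import all_boot all_order all_algebra.
From mathcomp Require Import all_classical all_reals all_analysis.
Set Implicit Arguments. Unset Strict Implicit. Unset Printing Implicit Defensive.
Import Order.TTheory GRing.Theory Num.Theory numFieldTopology.Exports numFieldNormedType.Exports.
Local Open Scope classical_set_scope.
Local Open Scope ring_scope.

(* A "cube" = bounded nondegenerate rectangular box in R^d, taken half-open
   [a_1,b_1) x ... x [a_d,b_d) so that partitions are genuinely disjoint.
   Points of R^d are row vectors 'rV[R]_d. *)
Definition is_cube (R : realType) (d : nat) (Q : set 'rV[R]_d) : Prop :=
  exists a b : 'I_d -> R, (forall i, a i < b i) /\
    Q = [set x | forall i, a i <= x ord0 i < b i].

Definition sqnorm (R : realType) (n : nat) (x : 'rV[R]_n) : R :=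
  \sum_(i < n) x ord0 i ^+ 2.

(* v is a unit normal vector to the paraboloid {(xi,|xi|^2)} at the point
   (xi,|xi|^2): the normal line there is spanned by (-2 xi, 1). *)
Definition unit_normal_at (R : realType) (d : nat) (xi : 'rV[R]_d)
    (v : 'rV[R]_(d + 1)) : Prop :=
  sqnorm v = 1 /\ exists t : R, v = t *: row_mx (- (2 : R) *: xi) (const_mx 1).

Definition unit_normal_to_cap (R : realType) (d : nat) (Q : set 'rV[R]_d)
    (v : 'rV[R]_(d + 1)) : Prop :=
  exists2 xi, Q xi & unit_normal_at xi v.

(* |v_1 /\ ... /\ v_k| = sqrt of the Gram determinant of the v_j *)
Definition wedge_norm (R : realType) (k n : nat) (v : 'I_k -> 'rV[R]_n) : R :=
  let V := \matrix_(j < k, i < n) v j ord0 i in Num.sqrt (\det (V *m V^T)).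

Definition transversal_cubes (R : realType) (d k : nat) (Q : 'I_k -> set 'rV[R]_d)
    : Prop :=
  exists2 c : R, 0 < c &
    forall v : 'I_k -> 'rV[R]_(d + 1),
      (forall j, unit_normal_to_cap (Q j) (v j)) -> c <= wedge_norm v.

Definition proj_coord (R : realType) (d : nat) (i : 'I_d) (x : 'rV[R]_d) : R :=
  x ord0 i.

Definition weakly_transversal_pivot (R : realType) (d k : nat)
    (Q : 'I_k -> set 'rV[R]_d) (j : 'I_k) : Prop :=
  exists (i : 'I_k.-1 -> 'I_d) (l : 'I_k.-1 -> 'I_k),
    injective i /\ injective l /\ (forall s, l s != j) /\
    forall s, @closure R (proj_coord (i s) @` Q j)
              `&` @closure R (proj_coord (i s) @` Q (l s)) = set0.

Definition weakly_transversal (R : realType) (d k : nat)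
    (Q : 'I_k -> set 'rV[R]_d) : Prop :=
  forall j, weakly_transversal_pivot Q j.

(* Main.v *)
Require Import Defs.
From HB Require Import structures.
From mathcomp Require Import all_boot all_order all_algebra.
From mathcomp Require Import all_classical all_reals all_analysis.
From mathcomp Require Import perm ring lra zify.
Import Order.TTheory GRing.Theory Num.Theory numFieldTopology.Exports numFieldNormedType.Exports.
Local Open Scope classical_set_scope.
Local Open Scope ring_scope.

Set Implicit Arguments. Unset Strict Implicit.




Lemma exists_large (R : realFieldType) (I : finType) (x : I -> R) (c2 : R) :
  0 < c2 -> c2 <= \sum_i x i -> exists i, c2 <= x i * (2 * #|I|%:R).
Proof.
move=> c0 cS; apply: contrapT => /forallNP H.
have H' : forall i, x i * (2 * #|I|%:R) <= c2.
  by move=> i; have /negP := H i; rewrite -ltNge => /ltW.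
case: (posnP #|I|) => [N0|Npos].
  move: cS; rewrite big_pred0 => [|i]; first by rewrite leNgt c0.
  by have := card0_eq N0 i.
have hh : (\sum_i x i) * (2 * #|I|%:R) <= c2 * #|I|%:R.
  rewrite mulr_suml; apply: le_trans (ler_sum _ (fun i _ => H' i)) _.
  by rewrite sumr_const mulr_natr.
set N := #|I|%:R in hh *; set S := \sum_i x i in hh cS.
have N0 : 0 < N by rewrite ltr0n.
nra.
Qed.

Lemma cb_expand (R : comPzRingType) (k n : nat) (A : 'M[R]_(k, n)) (B : 'M[R]_(n, k)) :
  \det (A *m B) = \sum_(f : {ffun 'I_k -> 'I_n})
     (\prod_a A a (f a)) * \det (\matrix_(a, b) B (f a) b).
Proof.
rewrite [LHS]/determinant.
under eq_bigr => s _.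
  rewrite (eq_bigr (fun i => \sum_m A i m * B m (s i))); last by move=> i _; rewrite mxE.
  rewrite bigA_distr_bigA big_distrr /=.
  over.
rewrite exchange_big /=; apply: eq_bigr => f _.
rewrite /determinant big_distrr /=; apply: eq_bigr => s _.
rewrite big_split /= mulrCA; congr (_ * (_ * _)).
by apply: eq_bigr => i _; rewrite mxE.
Qed.

Lemma prod_bound (R : realFieldType) (I : finType) (F : I -> R) (M : R) :
  0 <= M -> (forall i, `|F i| <= M) -> `|\prod_i F i| <= M ^+ #|I|.
Proof.
move=> M0 HF; rewrite normr_prod -prodr_const; apply: ler_prod => i _.
by rewrite normr_ge0 HF.
Qed.

Lemma cb_bound (R : realFieldType) k n (A : 'M[R]_(k,n)) (M c2 : R) :
  0 <= M -> (forall a m, `|A a m| <= M) -> 0 < c2 -> c2 <= \det (A *m A^T) ->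
  exists f : {ffun 'I_k -> 'I_n},
    c2 <= `|\det (\matrix_(a,b) A b (f a))| * M ^+ k * (2 * #|{ffun 'I_k -> 'I_n}|%:R).
Proof.
move=> M0 HA c0 cd.
have [|f Hf] := @exists_large _ _ (fun f : {ffun 'I_k -> 'I_n} => `|\det (\matrix_(a,b) A b (f a))| * M ^+ k) c2 c0.
  2: by exists f.
apply: (le_trans cd); apply: (le_trans (ler_norm _)).
rewrite cb_expand; apply: (le_trans (ler_norm_sum _ _ _)); apply: ler_sum => f _.
have -> : \matrix_(a, b) A^T (f a) b = \matrix_(a, b) A b (f a).
  by apply/matrixP => a b; rewrite !mxE.
rewrite normrM mulrC ler_wpM2l //.
by have := @prod_bound _ _ (fun a => A a (f a)) M M0 (fun a => HA _ _); rewrite card_ord.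
Qed.

Lemma leib_bound (R : realFieldType) k (Y : 'M[R]_k) (M d : R) :
  1 <= M -> (forall a b, `|Y a b| <= M) -> 0 < d -> d <= `|\det Y| ->
  exists s : 'S_k, forall a, d <= `|Y a (s a)| * M ^+ k * (2 * #|{perm 'I_k}|%:R).
Proof.
move=> M1 HY d0 dY.
have M0 : 0 <= M by apply: le_trans M1.
have [s Hs] : exists s : 'S_k, d <= `|\prod_i Y i (s i)| * (2 * #|{perm 'I_k}|%:R).
  have [|s Hs] := @exists_large _ _ (fun s : 'S_k => `|\prod_i Y i (s i)|) d d0.
    2: by exists s.
  apply: (le_trans dY); rewrite /determinant.
  apply: (le_trans (ler_norm_sum _ _ _)); apply: ler_sum => s _.
  by rewrite normrM normrX normrN normr1 expr1n mul1r.
exists s => a; apply: (le_trans Hs); rewrite ler_pM2r ?mulr_gt0 ?ltr0n //; last first.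
  by apply/card_gt0P; exists 1%g.
rewrite (bigD1 a) //= normrM ler_wpM2l //.
apply: (@le_trans _ _ (\prod_(i | i != a) M)).
  by rewrite normr_prod; apply: ler_prod => i _; rewrite normr_ge0 HY.
have -> : M ^+ k = \prod_(i < k) M by rewrite prodr_const card_ord.
rewrite [X in _ <= X](bigD1 a) //= ler_peMl //.
by apply: prodr_ge0.
Qed.


Definition Emx (R : pzRingType) {k} (j : 'I_k) : 'M[R]_k :=
  \matrix_(b, c) ((b == c)%:R - ((b != j) && (c == j))%:R).

Lemma det_Emx (R : comPzRingType) k (j : 'I_k) : \det (Emx R j) = 1.
Proof.
case: k j => [[]//|k] j.
rewrite (expand_det_row _ j) (bigD1 j) //= big1 ?addr0; last first.
  by move=> c cj; rewrite !mxE eqxx /= eq_sym (negbTE cj) subr0 mul0r.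
rewrite !mxE !eqxx /= subr0 mul1r /cofactor addnn -signr_odd odd_double expr0 mul1r.
have -> : row' j (col' j (Emx R j)) = 1%:M.
  apply/matrixP => a b; rewrite !mxE (inj_eq (@lift_inj _ j)).
  have /negbTE -> : lift j b != j by rewrite eq_sym neq_lift.
  by rewrite andbF subr0.
by rewrite det1.
Qed.

Lemma Emx_mul (R : pzRingType) k n (j : 'I_k) (W : 'M[R]_(k, n)) :
  Emx R j *m W = \matrix_(b, m) (W b m - (b != j)%:R * W j m).
Proof.
apply/matrixP => b m; rewrite !mxE.
under eq_bigr => c _ do rewrite !mxE mulrBl.
rewrite sumrB (bigD1 b) //= eqxx mul1r big1 ?addr0; last first.
  by move=> c /negbTE; rewrite eq_sym => ->; rewrite mul0r.
rewrite (bigD1 j) //= eqxx andbT big1 ?addr0 //.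
by move=> c /negbTE ->; rewrite andbF mul0r.
Qed.

Lemma det_inj (R : comPzRingType) k n (A : 'M[R]_(k, n)) (f : 'I_k -> 'I_n) :
  \det (\matrix_(a, b) A b (f a)) != 0 -> injective f.
Proof.
move=> H a a' faa; apply/eqP; apply: contraNT H => aa.
by apply/eqP; apply: (determinant_alternate aa) => b; rewrite !mxE faa.
Qed.
Definition wvec {R : realType} {d} (xi : 'rV[R]_d) : 'rV[R]_(d + 1) :=
  row_mx (- (2 : R) *: xi) (const_mx 1).
Definition tsc {R : realType} {d} (xi : 'rV[R]_d) : R := (Num.sqrt (sqnorm (wvec xi)))^-1.
Definition nvec {R : realType} {d} (xi : 'rV[R]_d) : 'rV[R]_(d + 1) := tsc xi *: wvec xi.

Lemma sqnormZ (R : realType) n (t : R) (v : 'rV[R]_n) : sqnorm (t *: v) = t ^+ 2 * sqnorm v.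
Proof. by rewrite /sqnorm mulr_sumr; apply: eq_bigr => i _; rewrite mxE exprMn. Qed.

Lemma sqnorm_w (R : realType) d (xi : 'rV[R]_d) : 1 <= sqnorm (wvec xi).
Proof.
rewrite /sqnorm big_split_ord /= big_ord1 /wvec row_mxEr mxE expr1n lerDr.
by apply: sumr_ge0 => i _; apply: sqr_ge0.
Qed.

Lemma tsc_bounds (R : realType) d (xi : 'rV[R]_d) : 0 < tsc xi <= 1.
Proof.
have h1 := sqnorm_w xi.
have hs : 1 <= Num.sqrt (sqnorm (wvec xi)) by rewrite -sqrtr1 ler_sqrt //; lra.
have hs0 : 0 < Num.sqrt (sqnorm (wvec xi)) by apply: lt_le_trans hs.
rewrite /tsc invr_gt0 hs0 invr_le1 ?unitf_gt0 //.
Qed.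

Lemma nvec_unit (R : realType) d (xi : 'rV[R]_d) : unit_normal_at xi (nvec xi).
Proof.
split; last by exists (tsc xi).
have h1 := sqnorm_w xi.
rewrite sqnormZ /tsc exprVn sqr_sqrtr ?mulVf //; last by apply: le_trans h1.
by apply: lt0r_neq0; apply: lt_le_trans h1.
Qed.

Lemma sqrt_lb (R : realType) (c x : R) : 0 < c -> c <= Num.sqrt x -> c ^+ 2 <= x.
Proof.
move=> c0 h; case: (ltP x 0) => hx.
  by move: h; rewrite ltr0_sqrtr // leNgt c0.
rewrite -(sqr_sqrtr hx); apply: lerXn2r => //; rewrite ?nnegrE ?sqrtr_ge0 //.
exact: ltW.
Qed.

Set Implicit Arguments. Unset Strict Implicit.

Definition etaC (R : realType) (d k : nat) (c B : R) : R :=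
  c ^+ 2 / ((4 * B + 2) ^+ k * (2 * #|{ffun 'I_k -> 'I_(d + 1)}|%:R))
   / ((4 * B + 2) ^+ k * (2 * #|{perm 'I_k}|%:R)) / 2.

Lemma card_ffun_gt0 k n : (0 < #|{ffun 'I_k -> 'I_n.+1}|)%N.
Proof. by apply/card_gt0P; exists [ffun=> ord0]. Qed.

Lemma card_perm_gt0 k : (0 < #|{perm 'I_k}|)%N.
Proof. by apply/card_gt0P; exists 1%g. Qed.

Lemma eta_gt0 (R : realType) d k (c B : R) : 0 < c -> 0 <= B -> 0 < etaC d k c B.
Proof.
move=> c0 B0; rewrite /etaC.
have M0 : 0 < 4 * B + 2 by lra.
have h1 : 0 < #|{ffun 'I_k -> 'I_(d + 1)}|%:R :> R by rewrite ltr0n addn1 card_ffun_gt0.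
have h2 : 0 < #|{perm 'I_k}|%:R :> R by rewrite ltr0n card_perm_gt0.
by do ![apply: divr_gt0 | apply: mulr_gt0 | apply: exprn_gt0] => //.
Qed.

Lemma wvec_l (R : realType) d (xi : 'rV[R]_d) i : wvec xi ord0 (lshift 1 i) = - 2 * xi ord0 i.
Proof. by rewrite /wvec row_mxEl !mxE. Qed.
Lemma wvec_r (R : realType) d (xi : 'rV[R]_d) o : wvec xi ord0 (rshift d o) = 1.
Proof. by rewrite /wvec row_mxEr !mxE. Qed.

Lemma key (R : realType) d k (xi : 'I_k -> 'rV[R]_d) (c B : R) (j : 'I_k) (i0 : 'I_d) :
  0 < c -> 0 <= B -> (forall l i, `|xi l ord0 i| <= B) ->
  c <= wedge_norm (fun l => nvec (xi l)) ->
  exists iF : 'I_k -> 'I_d,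
    (forall b b', b != j -> b' != j -> iF b = iF b' -> b = b') /\
    (forall b, b != j -> etaC d k c B <= `|xi b ord0 (iF b) - xi j ord0 (iF b)|).
Proof.
move=> c0 B0 hB hc.
set M := 4 * B + 2.
have M1 : 1 <= M by rewrite /M; lra.
set W := \matrix_(l, m) wvec (xi l) ord0 m : 'M[R]_(k, d + 1).
set V := \matrix_(l, m) nvec (xi l) ord0 m : 'M[R]_(k, d + 1).
have hV : V = diag_mx (\row_l tsc (xi l)) *m W.
  by rewrite mul_diag_mx; apply/matrixP => l m; rewrite !mxE.
have hG : \det (V *m V^T) = (\prod_l tsc (xi l)) ^+ 2 * \det (W *m W^T).
  rewrite hV trmx_mul !mulmxA det_mulmx -mulmxA det_mulmx det_tr det_diag.
  under eq_bigr do rewrite mxE.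
  by rewrite expr2; ring.
have hcV : c ^+ 2 <= \det (V *m V^T) by apply: sqrt_lb.
have p0 : 0 < (\prod_l tsc (xi l)) ^+ 2.
  by rewrite exprn_gt0 // prodr_gt0 // => l _; have /andP[] := tsc_bounds (xi l).
have p1 : (\prod_l tsc (xi l)) ^+ 2 <= 1.
  have hb : forall l : 'I_k, 0 <= tsc (xi l) <= 1.
    by move=> l; have /andP[h1 h2] := tsc_bounds (xi l); rewrite ltW.
  have q0 : 0 <= \prod_l tsc (xi l) by apply: prodr_ge0 => l _; have /andP[] := hb l.
  have q1 : \prod_l tsc (xi l) <= 1 by apply: prodr_ile1 => l _; exact: hb.
  by rewrite expr2; apply: mulr_ile1.
have hW : c ^+ 2 <= \det (W *m W^T).
  move: hcV; rewrite hG; set p := _ ^+ 2 in p0 p1 *; set G := \det _.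
  have cc : 0 < c ^+ 2 by rewrite exprn_gt0.
  move=> h; nra.
set U := Emx R j *m W.
have hU : \det (U *m U^T) = \det (W *m W^T).
  rewrite /U trmx_mul !mulmxA det_mulmx -mulmxA det_mulmx det_tr det_Emx.
  by rewrite mul1r mulr1.
have hWe : forall l m, W l m = wvec (xi l) ord0 m by move=> l m; rewrite /W mxE.
have hUe : forall b m, U b m = wvec (xi b) ord0 m - (b != j)%:R * wvec (xi j) ord0 m.
  by move=> b m; rewrite /U Emx_mul mxE !hWe.
have hWb : forall l m, `|W l m| <= 2 * B + 1.
  move=> l m; rewrite hWe -(splitK m); case: (fintype.split m) => [i|o] /=.
    rewrite wvec_l normrM normrN normr_nat; have := hB l i; lra.
  by rewrite wvec_r normr1; lra.
have hUb : forall b m, `|U b m| <= M.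
  move=> b m; rewrite hUe; apply: (le_trans (ler_normB _ _)).
  have h1 := hWb b m; have h2 := hWb j m; rewrite hWe in h1; rewrite hWe in h2.
  have h3 : `|(b != j)%:R * wvec (xi j) ord0 m| <= 2 * B + 1.
    by case: (b != j); rewrite ?mul1r ?mul0r ?normr0 //; lra.
  rewrite /M; lra.
have c20 : 0 < c ^+ 2 by rewrite exprn_gt0.
have hW' : c ^+ 2 <= \det (U *m U^T) by rewrite hU.
have [f hf] := cb_bound (ltW (lt_le_trans ltr01 M1)) hUb c20 hW'.
set N1 := #|{ffun 'I_k -> 'I_(d + 1)}|%:R : R.
set N2 := #|{perm 'I_k}|%:R : R.
have N10 : 0 < N1 by rewrite ltr0n addn1 card_ffun_gt0.
have N20 : 0 < N2 by rewrite ltr0n card_perm_gt0.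
have Mk : 0 < M ^+ k by rewrite exprn_gt0 // (lt_le_trans ltr01 M1).
set Y := \matrix_(a, b) U b (f a).
set del := c ^+ 2 / (M ^+ k * (2 * N1)).
have del0 : 0 < del by rewrite divr_gt0 // !mulr_gt0.
have X1 : 0 < M ^+ k * (2 * N1) by rewrite !mulr_gt0.
have X2 : 0 < M ^+ k * (2 * N2) by rewrite !mulr_gt0.
have hdel : del <= `|\det Y|.
 by move: hf; rewrite /del ler_pdivrMr // !mulrA.
have hY : forall a b, `|Y a b| <= M by move=> a b; rewrite mxE.
have [s hs] := leib_bound M1 hY del0 hdel.
set et := del / (M ^+ k * (2 * N2)).
have et0 : 0 < et by rewrite divr_gt0 // !mulr_gt0.
have hs' : forall a, et <= `|U (s a) (f a)|.
  by move=> a; have := hs a; rewrite mxE => h; rewrite /et ler_pdivrMr //; move: h; rewrite !mulrA.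
have finj : injective f.
  apply: (@det_inj _ _ _ U) ; rewrite -normr_gt0 -/Y.
  exact: lt_le_trans hdel.
pose g b := f ((s^-1)%g b).
have hg : forall b, et <= `|U b (g b)|.
  by move=> b; have := hs' ((s^-1)%g b); rewrite permKV.
have ginj : injective g by move=> b b' /finj /perm_inj.
have hl : forall b, b != j -> exists i, fintype.split (g b) = inl i /\
              et <= 2 * `|xi b ord0 i - xi j ord0 i|.
  move=> b bj; have := hg b; rewrite hUe bj mul1r.
  rewrite -(splitK (g b)); case: (fintype.split (g b)) => [i|o] /= h.
    exists i; split; first exact: (unsplitK (inl _ i)).
    move: h; rewrite !wvec_l.
    have -> : - 2 * xi b ord0 i - - 2 * xi j ord0 i = (- 2) * (xi b ord0 i - xi j ord0 i).
      by ring.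
    by rewrite normrM normrN normr_nat.
  by move: h; rewrite !wvec_r subrr normr0 leNgt et0.
pose iF b := match fintype.split (g b) with inl i => i | inr _ => i0 end.
exists iF; split.
  move=> b b' bj b'j; have [i [hi _]] := hl b bj; have [i' [hi' _]] := hl b' b'j.
  rewrite /iF hi hi' => ii'; apply: ginj.
  by rewrite -(splitK (g b)) -(splitK (g b')) hi hi' ii'.
move=> b bj; have [i [hi h]] := hl b bj; rewrite /iF hi.
have -> : etaC d k c B = et / 2 by [].
rewrite ler_pdivrMr //; lra.
Qed.

Unset Implicit Arguments. Set Strict Implicit.


Lemma le_sum_term (R : numDomainType) (I : finType) (F : I -> R) (i : I) :
  (forall j, 0 <= F j) -> F i <= \sum_j F j.
Proof.
move=> H; rewrite (bigD1 i) //= lerDl; exact: sumr_ge0.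
Qed.

Lemma closure_in (R : realType) (A : set R) (al be : R) :
  A `<=` [set y | al <= y <= be] -> closure A `<=` [set y | al <= y <= be].
Proof.
move=> AC.
have cC : closed [set y : R | al <= y <= be].
  have -> : [set y : R | al <= y <= be] = [set y | al <= y] `&` [set y | y <= be].
    by apply/seteqP; split => y /=; [move/andP|move=> [-> ->]].
  exact: closedI (@closed_ge _ _) (@closed_le _ _).
rewrite [X in _ `<=` X](closure_id _).1 //; exact: closureS.
Qed.

Theorem claim3p4 (R : realType) (d k : nat) (Q : 'I_k -> set 'rV[R]_d) :
  (2 <= k)%N -> (k <= d.+1)%N ->
  (forall l, is_cube (Q l)) -> transversal_cubes Q ->
  exists (n : 'I_k -> nat) (sub : forall l : 'I_k, 'I_(n l) -> set 'rV[R]_d),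
    (forall l i, is_cube (sub l i)) /\
    (forall l, Q l = \bigcup_(i in [set: 'I_(n l)]) sub l i) /\
    (forall l (i i' : 'I_(n l)), i != i' -> sub l i `&` sub l i' = set0) /\
    (forall c : forall l : 'I_k, 'I_(n l),
        weakly_transversal (fun l => sub l (c l))).
Proof.
move=> hk hkd hQ [c c0 hc].
case: k Q hk hkd hQ hc => [|[|k]] Q // _ hkd hQ hc.
have d0 : (0 < d)%N by lia.
pose i0 : 'I_d := Ordinal d0.
have /choice [ab hab] : forall l, exists p : ('I_d -> R) * ('I_d -> R),
    (forall i, p.1 i < p.2 i) /\ Q l = [set x | forall i, p.1 i <= x ord0 i < p.2 i].
  by move=> l; have [a [b [h1 h2]]] := hQ l; exists (a, b).
pose a l := (ab l).1; pose b l := (ab l).2.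
have hab1 : forall l i, a l i < b l i by move=> l; exact: (hab l).1.
have hQe : forall l, Q l = [set x | forall i, a l i <= x ord0 i < b l i] by move=> l; exact: (hab l).2.
pose B := \sum_l \sum_i (`|a l i| + `|b l i|).
have hB : forall l i, `|a l i| + `|b l i| <= B.
  move=> l i.
  have h1 := @le_sum_term R _ (fun i => `|a l i| + `|b l i|) i (fun j => addr_ge0 (normr_ge0 _) (normr_ge0 _)).
  have h2 := @le_sum_term R _ (fun l => \sum_i (`|a l i| + `|b l i|)) l
    (fun l' => sumr_ge0 _ (fun j _ => addr_ge0 (normr_ge0 _) (normr_ge0 _))).
  exact: le_trans h1 h2.
have B0 : 0 <= B by apply: le_trans (hB (ord0) i0); rewrite addr_ge0.
pose et := etaC d k.+2 c B.
have et0 : 0 < et by apply: eta_gt0.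
pose N := (Num.truncn (B / et)).+1.
have hN : B < N%:R * et.
  by rewrite -ltr_pdivrMr // truncnS_gt.
have N0 : 0 < N%:R :> R by rewrite ltr0n.
pose h l i := (b l i - a l i) / N%:R.
have h0 : forall l i, 0 < h l i by move=> l i; rewrite divr_gt0 // subr_gt0.
have hNh : forall l i, N%:R * h l i = b l i - a l i.
  by move=> l i; rewrite /h mulrC divfK // lt0r_neq0.
have het : forall l i, h l i < et.
  move=> l i; rewrite -(ltr_pM2l N0) hNh; apply: le_lt_trans hN.
  have := hB l i; have := hab1 l i.
  have := ler_norm (b l i); have := ler_norm (- a l i); rewrite normrN; lra.
pose T := {ffun 'I_d -> 'I_N}.
pose box l (F : T) := [set x : 'rV[R]_d | forall r,
   a l r + (F r)%:R * h l r <= x ord0 r < a l r + (F r).+1%:R * h l r].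
exists (fun _ => #|T|), (fun l i => box l (enum_val i)).
have hbox_lo : forall l (F : T) r, a l r <= a l r + (F r)%:R * h l r.
  by move=> l F r; rewrite lerDl mulr_ge0 // ltW.
have hbox_hi : forall l (F : T) r, a l r + (F r).+1%:R * h l r <= b l r.
  move=> l F r; rewrite -lerBrDl -hNh ler_pM2r // ler_nat; exact: ltn_ord.
split.
  move=> l i; exists (fun r => a l r + (enum_val i r)%:R * h l r),
    (fun r => a l r + (enum_val i r).+1%:R * h l r); split => // r.
  by rewrite ltrD2l ltr_pM2r // ltr_nat.
split.
  move=> l; rewrite hQe; apply/seteqP; split => x /=.
    move=> hx.
    have hF : forall r, (Num.truncn ((x ord0 r - a l r) / h l r) < N)%N.
      move=> r; rewrite ltnS truncn_le_nat ltr_pdivrMr // hNh.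
      by have := hx r; move/andP => [_ h2]; lra.
    pose F : T := [ffun r => Ordinal (hF r)].
    exists (enum_rank F) => //; rewrite enum_rankK => r; rewrite ffunE /=.
    have /andP[h1 h2] := hx r.
    have y0 : 0 <= (x ord0 r - a l r) / h l r by rewrite divr_ge0 ?subr_ge0 // ltW.
    apply/andP; split.
      rewrite -lerBrDl -ler_pdivlMr //; by rewrite truncn_le.
    by rewrite -ltrBlDl -ltr_pdivrMr // truncnS_gt.
  move=> [i _ hi] r; have /andP[h1 h2] := hi r; apply/andP; split.
    exact: le_trans (hbox_lo _ _ _) h1.
  exact: lt_le_trans h2 (hbox_hi _ _ _).
split.
  move=> l i i' ii'; rewrite -subset0 => x [hx hx'].
  have : enum_val i != enum_val i' :> T by rewrite (inj_eq enum_val_inj).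
  case/eqP; apply/ffunP => r; apply/val_inj/eqP; rewrite eqn_leq.
  have /andP[h1 h2] := hx r; have /andP[h3 h4] := hx' r.
  set u := enum_val i r; set u' := enum_val i' r.
  have e1 : u%:R * h l r < u'.+1%:R * h l r by lra.
  have e2 : u'%:R * h l r < u.+1%:R * h l r by lra.
  rewrite ltr_pM2r // ltr_nat in e1; rewrite ltr_pM2r // ltr_nat in e2.
  by rewrite -ltnS e1 -ltnS e2.
move=> cc j.
pose F l : T := enum_val (cc l).
pose xi l : 'rV[R]_d := \row_r (a l r + (F l r)%:R * h l r).
have hxiE : forall l r, xi l ord0 r = a l r + (F l r)%:R * h l r by move=> l r; rewrite mxE.
have hxi1 : forall l r, a l r <= xi l ord0 r < b l r.
  move=> l r; rewrite hxiE hbox_lo /=; apply: lt_le_trans (hbox_hi l (F l) r).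
  by rewrite ltrD2l ltr_pM2r // ltr_nat.
have hxiQ : forall l, Q l (xi l) by move=> l; rewrite hQe => r; exact: hxi1.
have hxiB : forall l r, `|xi l ord0 r| <= B.
  move=> l r; have /andP[h1 h2] := hxi1 l r; have := hB l r.
  have := ler_norm (b l r); have := ler_norm (- a l r); rewrite normrN => e1 e2 e3.
  have n1 := normr_ge0 (a l r); have n2 := normr_ge0 (b l r).
  rewrite ler_norml; apply/andP; split; lra.
have hw : c <= wedge_norm (fun l => nvec (xi l)).
  apply: hc => l; exists (xi l); [exact: hxiQ | exact: nvec_unit].
have [iF [hinj hsep]] := key (xi:=xi) j i0 c0 B0 hxiB hw.
have nj : forall s, lift j s != j by move=> s; rewrite eq_sym neq_lift.
exists (fun s => iF (lift j s)), (fun s => lift j s).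
split; first by move=> s s' /(hinj _ _ (nj s) (nj s')) /lift_inj.
split; first exact: lift_inj.
split; first exact: nj.
move=> s; set bb := lift j s; set r := iF bb.
rewrite -subset0 => y [hy1 hy2].
have hsub : forall l, proj_coord r @` box l (F l) `<=`
    [set y | xi l ord0 r <= y <= xi l ord0 r + h l r].
  move=> l _ [x hx <-]; rewrite /proj_coord hxiE; have /andP[h1 h2] := hx r.
  move: h2; rewrite -[(F l r).+1]addn1 natrD mulrDl mul1r => h2.
  apply/andP; split; lra.
have /andP[k1 k2] := @closure_in R _ _ _ (hsub j) _ hy1.
have /andP[k3 k4] := @closure_in R _ _ _ (hsub bb) _ hy2.
have := hsep bb (nj s); rewrite -/r => hs.
have := het bb r; have := het j r => t1 t2.
have : `|xi bb ord0 r - xi j ord0 r| < et by rewrite ltr_norml; apply/andP; split; lra.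
by rewrite ltNge hs.
Qed.
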